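(* Let $m,\ell$ be positive integers and $r$ an integer. (a) If $r\in[2,2^m)$, then $\rho(t)\le 2^{m-t}$ for every positive integer $t$. (b) If $r\in[2^{m-1},2^m)$ with $r\ge2$, then $\rho(t)\le\min(2^{m-t},\,2^{t+3-m})$ for every positive integer $t$.
   Context: For integers $u$ and $N\ge1$, $\{u\}_N$ denotes the residue of $u$ modulo $N$ in $[-N/2,N/2)$. Let $\beta=2^{m+\ell}\bmod r$, $L=\lfloor2^{m+\ell}/r\rfloor$, and for an integer $j$ let $\alpha_r(j)=\{rj\}_{2^{m+\ell}}$. The probability of a frequency $j\in\{0,\dots,2^{m+\ell}-1\}$ is $$\frac{\beta}{2^{2(m+\ell)}}\Bigl|\sum_{b=0}^{L}e^{i\theta b}\Bigr|^2+\frac{r-\beta}{2^{2(m+\ell)}}\Bigl|\sum_{b=0}^{L-1}e^{i\theta b}\Bigr|^2,\qquad \theta=2\pi\alpha_r(j)/2^{m+\ell}.$$ For a positive integer $t$, $\rho(t)$ is the total probability of those $j\in\{0,\dots,2^{m+\ell}-1\}$ with $|\alpha_r(j)|\in[2^{t-1},2^t)$. *)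

(* Defs.v *)
From Stdlib Require Import Reals ZArith.
Open Scope R_scope.

Fixpoint rsum (f : nat -> R) (n : nat) : R :=
  match n with O => 0 | S k => rsum f k + f k end.

(* {u}_N : residue of u modulo N in [-N/2, N/2) (for N >= 1) *)
Definition symmod (u N : Z) : Z :=
  ((u + N / 2) mod N - N / 2)%Z.

Definition Nmod (m l : nat) : Z := (2 ^ Z.of_nat (m + l))%Z.

Definition beta (m l : nat) (r : Z) : Z := (Nmod m l mod r)%Z.
Definition Lq (m l : nat) (r : Z) : Z := (Nmod m l / r)%Z.

Definition alpha (m l : nat) (r j : Z) : Z := symmod (r * j) (Nmod m l).

(* |sum_{b=0}^{n-1} e^{i theta b}|^2, written as (real part)^2 + (imag part)^2 *)
Definition geomsq (theta : R) (n : nat) : R :=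
  (rsum (fun b => cos (theta * INR b)) n) ^ 2 +
  (rsum (fun b => sin (theta * INR b)) n) ^ 2.

Definition prob (m l : nat) (r : Z) (j : nat) : R :=
  let N := IZR (Nmod m l) in
  let theta := 2 * PI * IZR (alpha m l r (Z.of_nat j)) / N in
  let L := Z.to_nat (Lq m l r) in
  IZR (beta m l r) / N ^ 2 * geomsq theta (L + 1) +
  IZR (r - beta m l r) / N ^ 2 * geomsq theta L.

Definition rho (m l : nat) (r : Z) (t : nat) : R :=
  rsum (fun j =>
          let a := Z.abs (alpha m l r (Z.of_nat j)) in
          if andb (Z.leb (2 ^ (Z.of_nat t - 1)) a) (Z.ltb a (2 ^ Z.of_nat t))
          then prob m l r j else 0)
       (Z.to_nat (Nmod m l)).

(* Main.v *)
Require Import Defs.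
From Stdlib Require Import Reals ZArith Lra Lia Psatz List.
Open Scope R_scope.

Lemma rsum_le (f g : nat -> R) n : (forall j, (j < n)%nat -> f j <= g j) -> rsum f n <= rsum g n.
Proof. induction n; simpl; intros H. lra. assert (f n <= g n) by (apply H; lia).
  assert (rsum f n <= rsum g n) by (apply IHn; intros; apply H; lia). lra. Qed.

Lemma rsum_count (P : nat -> bool) c n :
  rsum (fun j => if P j then c else 0) n = c * INR (length (filter P (seq 0 n))).
Proof. induction n. simpl. ring.
  rewrite seq_S, filter_app, length_app. simpl rsum. rewrite IHn. simpl.
  destruct (P n); simpl; rewrite ?plus_INR; simpl; ring. Qed.

Lemma geom_le_sq th n : geomsq th n <= INR n ^ 2.
Proof. unfold geomsq. induction n. simpl. lra.
  simpl rsum. set (C := rsum (fun b => cos (th * INR b)) n) in *. set (S := rsum (fun b => sin (th * INR b)) n) in *.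
  set (c := cos (th * INR n)). set (s := sin (th * INR n)).
  assert (cs : c^2 + s^2 = 1) by (unfold c, s; rewrite <- (sin2_cos2 (th * INR n)); unfold Rsqr; lra).
  assert (Hid : (C*c + S*s)^2 + (C*s - S*c)^2 = (C^2+S^2)*(c^2+s^2)) by ring.
  assert (Hx : (C*c + S*s)^2 <= INR n ^2). { rewrite cs in Hid. assert (0 <= (C*s - S*c)^2) by apply pow2_ge_0. lra. }
  assert (0 <= INR n) by apply pos_INR.
  assert (C*c+S*s <= INR n) by nra.
  rewrite S_INR. nra. Qed.

Lemma geom_sin th n : geomsq th n * sin (th/2) ^ 2 <= 1.
Proof.
  set (x := th/2). replace th with (2*x) by (unfold x; field).
  assert (H : forall n, 2 * sin x * rsum (fun b => cos (2*x*INR b)) n = sin (2*x*INR n - x) + sin x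
              /\ 2 * sin x * rsum (fun b => sin (2*x*INR b)) n = cos x - cos (2*x*INR n - x)).
  { induction n0. simpl. replace (2*x*0-x) with (-x) by ring. rewrite sin_neg, cos_neg. lra.
    simpl rsum. destruct IHn0 as [H1 H2]. rewrite S_INR.
    replace (2*x*(INR n0+1) - x) with (2*x*INR n0 + x) by ring.
    rewrite Rmult_plus_distr_l, Rmult_plus_distr_l, H1, H2.
    rewrite !sin_plus, !sin_minus, !cos_plus, !cos_minus. split; ring. }
  destruct (H n) as [H1 H2]. unfold geomsq.
  set (C := rsum (fun b => cos (2*x*INR b)) n) in *. set (S := rsum (fun b => sin (2*x*INR b)) n) in *.
  set (u := 2*x*INR n - x) in *.
  assert (e1 := sin2_cos2 u). assert (e2 := sin2_cos2 x). unfold Rsqr in *.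
  assert (4 * ((C^2 + S^2) * sin x ^2) = (sin u + sin x)^2 + (cos x - cos u)^2).
  { rewrite <- H1, <- H2. ring. }
  assert (0 <= (sin u - sin x)^2) by apply pow2_ge_0.
  assert (0 <= (cos x + cos u)^2) by apply pow2_ge_0.
  nra. Qed.

Lemma sin_lb_poly x : 0 <= x -> x <= PI -> x - x^3/6 + x^5/120 - x^7/5040 <= sin x.
Proof. intros. destruct (SIN x H H0) as [H1 _].
  assert (E : sin_lb x = x - x^3/6 + x^5/120 - x^7/5040)
    by (unfold sin_lb, sin_approx, sin_term; simpl; field).
  lra. Qed.

Lemma sin_lower (a A N : R) : 0 < A <= a -> 2*a <= N -> (4*A <= N \/ 2*A = N) ->
  (2*A/N)^2 <= sin (PI*a/N)^2.
Proof.
  intros [HA Ha] HN Hc. assert (Npos : 0 < N) by lra.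
  assert (P3 := PI2_3_2). assert (P4 := PI_4).
  set (x := PI*a/N).
  assert (x0 : 0 <= x) by (unfold x; apply Rmult_le_pos; [apply Rmult_le_pos; lra | left; apply Rinv_0_lt_compat; lra]).
  assert (xle : x <= PI/2). { unfold x. apply (Rmult_le_reg_r N); [lra|]. field_simplify; [|lra]. nra. }
  assert (q0 : 0 <= 2*A/N) by (apply Rmult_le_pos; [lra | left; apply Rinv_0_lt_compat; lra]).
  assert (key : 2*A/N <= sin x).
  { destruct (Rle_lt_dec (4*a) N) as [h|h].
    - assert (x1 : x <= 1). { unfold x. apply (Rmult_le_reg_r N); [lra|]. field_simplify; [|lra]. nra. }
      assert (hs := sin_lb_poly x x0 ltac:(lra)).
      assert (x2 : x^2 <= 1) by nra. assert (0 <= x^5) by (apply pow_le; lra). assert (0 <= x^3) by (apply pow_le; lra).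
      assert (x^3 <= x) by (replace (x^3) with (x*x^2) by ring; nra).
      assert (x^7 <= x^5) by (replace (x^7) with (x^5*x^2) by ring; nra).
      assert (x^5 <= x^3) by (replace (x^5) with (x^3*x^2) by ring; nra).
      assert (2*A/N <= 2*a/N) by (apply Rmult_le_compat_r; [left; apply Rinv_0_lt_compat; lra | lra]).
      assert (ex : 2*a/N = 2*x/PI) by (unfold x; field; split; lra).
      assert (2*x/PI <= 5/6 * x). { apply (Rmult_le_reg_r PI); [lra|]. field_simplify; [|lra]. nra. }
      lra.
    - destruct Hc as [Hc|Hc].
      + assert (sin (PI/6) <= sin x).
        { left. apply sin_increasing_1; try lra.
          unfold x. apply (Rmult_lt_reg_r N); [lra|]. field_simplify; [|lra]. nra. }
        rewrite sin_PI6 in H.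
        assert (2*A/N <= 1/2). { apply (Rmult_le_reg_r N); [lra|]. field_simplify; lra. }
        lra.
      + assert (ea : a = N/2) by lra. assert (x = PI/2) by (unfold x; rewrite ea; field; lra).
        rewrite H, sin_PI2. replace (2*A/N) with 1 by (rewrite Hc; field; lra). lra. }
  nra. Qed.

Lemma count_inj (n K : nat) (P : nat -> bool) (f : nat -> nat) :
  (forall j, (j<n)%nat -> P j = true -> (f j < K)%nat) ->
  (forall j k, (j<n)%nat -> (k<n)%nat -> P j = true -> P k = true -> f j = f k -> j = k) ->
  (length (filter P (seq 0 n)) <= K)%nat.
Proof.
  intros H1 H2. rewrite <- (length_map f). rewrite <- (length_seq K 0).
  apply NoDup_incl_length.
  - apply NoDup_map_NoDup_ForallPairs; [| apply NoDup_filter, seq_NoDup].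
    intros x y Hx Hy. rewrite filter_In, in_seq in Hx, Hy. destruct Hx, Hy. intro; apply H2; auto; lia.
  - intros y Hy. rewrite in_map_iff in Hy. destruct Hy as [x [<- Hx]].
    rewrite filter_In, in_seq in Hx. rewrite in_seq. destruct Hx. specialize (H1 x ltac:(lia) H0). lia.
Qed.

Lemma pow2_div (K : nat) (d : Z) : (0 < d)%Z -> (d | 2 ^ Z.of_nat K)%Z -> exists e, (0 <= e)%Z /\ d = (2 ^ e)%Z.
Proof.
  revert d. induction K; intros d Hd Hdiv.
  - simpl in Hdiv. apply Z.divide_1_r in Hdiv. exists 0%Z. lia.
  - rewrite Nat2Z.inj_succ, Z.pow_succ_r in Hdiv by lia.
    destruct (Z.Even_or_Odd d) as [[d' Hd']|[d' Hd']]; subst d.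
    + apply Z.mul_divide_cancel_l in Hdiv; [|lia].
      destruct (IHK d' ltac:(lia) Hdiv) as [e [He ->]]. exists (Z.succ e). split. lia.
      rewrite Z.pow_succ_r; lia.
    + apply Z.gauss in Hdiv. apply IHK; auto; lia.
      rewrite Z.gcd_comm. replace (2*d'+1)%Z with (1 + d'*2)%Z by ring.
      rewrite Z.gcd_add_mult_diag_r. reflexivity.
Qed.

Lemma alpha_decomp m l r j : alpha m l r j = (r*j - Nmod m l * ((r*j + Nmod m l / 2) / Nmod m l))%Z.
Proof. unfold alpha, symmod. assert (0 < Nmod m l)%Z by (unfold Nmod; apply Z.pow_pos_nonneg; lia).
  rewrite Z.mod_eq by lia. ring. Qed.

Definition Pt (m l : nat) (r : Z) (t : nat) (j : nat) : bool :=
  let a := Z.abs (alpha m l r (Z.of_nat j)) in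
  andb (Z.leb (2 ^ (Z.of_nat t - 1)) a) (Z.ltb a (2 ^ Z.of_nat t)).

Lemma count_alpha m l r t : (1 <= t)%nat -> (1 <= r)%Z ->
  (length (filter (Pt m l r t) (seq 0 (Z.to_nat (Nmod m l)))) <= 2 ^ t)%nat.
Proof.
  intros Ht Hr.
  set (N := Nmod m l).
  assert (Npos : (0 < N)%Z) by (unfold N, Nmod; apply Z.pow_pos_nonneg; lia).
  set (g := Z.gcd r N).
  assert (gpos : (0 < g)%Z).
  { assert (0 <= g)%Z by apply Z.gcd_nonneg. assert (g <> 0)%Z by (unfold g; rewrite Z.gcd_eq_0; lia). lia. }
  destruct (Z.gcd_divide_l r N) as [r' Er]. destruct (Z.gcd_divide_r r N) as [M EN].
  fold g in Er, EN.
  assert (cop : Z.gcd r' M = 1%Z).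
  { assert (h := Z.gcd_div_gcd r N g ltac:(lia) eq_refl).
    rewrite Er, EN, !Z.div_mul in h by lia. exact h. }
  assert (Mpos : (0 < M)%Z) by nia.
  destruct (pow2_div (m + l) g gpos) as [e [He Eg]].
  { exists M. exact EN. }
  set (T := (Z.of_nat t - 1)%Z).
  assert (ET : Z.of_nat t = (T + 1)%Z) by (unfold T; lia).
  set (A := (2 ^ T)%Z).
  assert (E2A : (2 ^ Z.of_nat t = 2 * A)%Z) by (rewrite ET, Z.pow_add_r by lia; unfold A; ring).
  assert (Apos : (0 < A)%Z) by (apply Z.pow_pos_nonneg; lia).
  assert (Hj : forall j : nat, Pt m l r t j = true ->
     exists w h, alpha m l r (Z.of_nat j) = (g * w)%Z /\ A = (g * h)%Z /\ (0 < h)%Z /\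
       (h <= Z.abs w < 2 * h)%Z /\
       (r' * Z.of_nat j - M * ((r * Z.of_nat j + N / 2) / N) = w)%Z).
  { intros j Hp. unfold Pt in Hp. rewrite E2A in Hp. fold T A in Hp.
    apply andb_prop in Hp. destruct Hp as [H1 H2]. apply Z.leb_le in H1. apply Z.ltb_lt in H2.
    set (w := (r' * Z.of_nat j - M * ((r * Z.of_nat j + N / 2) / N))%Z).
    assert (Ea : alpha m l r (Z.of_nat j) = (g * w)%Z).
    { rewrite alpha_decomp. fold N. unfold w. rewrite Er at 1. rewrite EN at 1. ring. }
    rewrite Ea in H1, H2. rewrite Z.abs_mul, Z.abs_eq in H1, H2 by lia.
    assert (1 <= Z.abs w)%Z by nia.
    assert (Hg2 : (g < 2 ^ (T + 1))%Z) by (rewrite Z.pow_add_r by lia; fold A; nia).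
    rewrite Eg in Hg2. apply Z.pow_lt_mono_r_iff in Hg2; [|lia|lia].
    exists w, (2 ^ (T - e))%Z. split; [exact Ea|]. split.
    { unfold A. rewrite Eg, <- Z.pow_add_r by lia. f_equal. lia. }
    assert (0 < 2 ^ (T - e))%Z by (apply Z.pow_pos_nonneg; lia).
    assert (A = g * 2 ^ (T - e))%Z by (unfold A; rewrite Eg, <- Z.pow_add_r by lia; f_equal; lia).
    split; [lia|]. split; [nia|]. reflexivity. }
  set (c := fun x : Z => if (0 <=? x)%Z then (x - A)%Z else (- x)%Z).
  apply (count_inj _ _ _ (fun j => Z.to_nat (c (alpha m l r (Z.of_nat j)) + Z.of_nat j / M))).
  - intros j Hjn Hp. destruct (Hj j Hp) as [w [h [Ea [EA [hpos [Hw _]]]]]].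
    rewrite Ea. apply Nat2Z.inj_lt. rewrite Nat2Z.inj_pow, Z2Nat.id.
    + change (Z.of_nat 2) with 2%Z. rewrite E2A.
      assert (0 <= Z.of_nat j / M)%Z by (apply Z.div_pos; lia).
      assert (Z.of_nat j / M < g)%Z by (apply Z.div_lt_upper_bound; lia).
      unfold c. destruct (0 <=? g * w)%Z eqn:E.
      * apply Z.leb_le in E. assert (0 <= w)%Z by nia. rewrite Z.abs_eq in Hw by lia. nia.
      * apply Z.leb_gt in E. assert (w < 0)%Z by nia. rewrite Z.abs_neq in Hw by lia. nia.
    + assert (0 <= Z.of_nat j / M)%Z by (apply Z.div_pos; lia).
      unfold c. destruct (0 <=? g * w)%Z eqn:E.
      * apply Z.leb_le in E. assert (0 <= w)%Z by nia. rewrite Z.abs_eq in Hw by lia. nia.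
      * apply Z.leb_gt in E. assert (w < 0)%Z by nia. rewrite Z.abs_neq in Hw by lia. nia.
  - intros j k Hjn Hkn Hpj Hpk Hf.
    destruct (Hj j Hpj) as [w1 [h1 [Ea1 [EA1 [hpos1 [Hw1 Ew1]]]]]].
    destruct (Hj k Hpk) as [w2 [h2 [Ea2 [EA2 [hpos2 [Hw2 Ew2]]]]]].
    assert (h1 = h2) by nia. subst h2.
    rewrite Ea1, Ea2 in Hf.
    assert (Hjn' : (Z.of_nat j < N)%Z) by (unfold N; lia).
    assert (Hkn' : (Z.of_nat k < N)%Z) by (unfold N; lia).
    assert (0 <= Z.of_nat j / M)%Z by (apply Z.div_pos; lia).
    assert (Z.of_nat j / M < g)%Z by (apply Z.div_lt_upper_bound; lia).
    assert (0 <= Z.of_nat k / M)%Z by (apply Z.div_pos; lia).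
    assert (Z.of_nat k / M < g)%Z by (apply Z.div_lt_upper_bound; lia).
    assert (Hc : forall w, (h1 <= Z.abs w < 2*h1)%Z -> exists u, c (g*w)%Z = (g*u)%Z /\ (0 <= u)%Z /\
       (forall w', (h1 <= Z.abs w' < 2*h1)%Z -> c (g*w')%Z = (g*u)%Z -> w' = w)).
    { intros w Hw. unfold c. destruct (0 <=? g * w)%Z eqn:E.
      - apply Z.leb_le in E. assert (0 <= w)%Z by nia. exists (w - h1)%Z.
        split; [nia|]. split; [lia|]. intros w' Hw' Hc'.
        destruct (0 <=? g * w')%Z eqn:E'.
        + apply Z.leb_le in E'. nia.
        + apply Z.leb_gt in E'. assert (w' < 0)%Z by nia. exfalso. nia.
      - apply Z.leb_gt in E. assert (w < 0)%Z by nia. exists (- w)%Z.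
        split; [nia|]. split; [lia|]. intros w' Hw' Hc'.
        destruct (0 <=? g * w')%Z eqn:E'.
        + apply Z.leb_le in E'. assert (0 <= w')%Z by nia. exfalso. nia.
        + nia. }
    destruct (Hc w1 Hw1) as [u1 [Eu1 [u1p _]]].
    destruct (Hc w2 Hw2) as [u2 [Eu2 [u2p Hinj]]].
    rewrite Eu1, Eu2 in Hf. apply Z2Nat.inj in Hf; [|nia|nia].
    assert (u1 = u2) by nia. subst u2.
    assert (Eb : (Z.of_nat j / M = Z.of_nat k / M)%Z) by nia.
    assert (w1 = w2) by (apply Hinj; [exact Hw1| exact Eu1]). subst w2.
    assert (Hd : (M | r' * (Z.of_nat j - Z.of_nat k))%Z).
    { exists ((r * Z.of_nat j + N / 2) / N - (r * Z.of_nat k + N / 2) / N)%Z. nia. }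
    apply Z.gauss in Hd; [| rewrite Z.gcd_comm; exact cop].
    destruct Hd as [z Hz].
    assert (Ej := Z.div_mod (Z.of_nat j) M ltac:(lia)).
    assert (Ek := Z.div_mod (Z.of_nat k) M ltac:(lia)).
    assert (mj := Z.mod_pos_bound (Z.of_nat j) M Mpos).
    assert (mk := Z.mod_pos_bound (Z.of_nat k) M Mpos).
    assert (z = 0)%Z by nia. subst z. lia.
Qed.

Lemma powZ a b : powerRZ 2 (Z.of_nat a - Z.of_nat b) = 2^a / 2^b.
Proof. unfold Z.sub. rewrite powerRZ_add, powerRZ_neg', <- !pow_powerRZ by lra.
  unfold Rdiv. reflexivity. Qed.

Lemma rho_bound m l r t C : (1 <= t)%nat -> (1 <= r)%Z -> 0 <= C ->
  (forall j, Pt m l r t j = true -> prob m l r j <= C) -> rho m l r t <= C * 2 ^ t.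
Proof.
  intros Ht Hr HC H.
  change (rho m l r t) with (rsum (fun j => if Pt m l r t j then prob m l r j else 0) (Z.to_nat (Nmod m l))).
  eapply Rle_trans. apply (rsum_le _ (fun j => if Pt m l r t j then C else 0)).
  { intros j _. destruct (Pt m l r t j) eqn:E. apply H; auto. lra. }
  rewrite rsum_count. apply Rmult_le_compat_l; auto.
  rewrite <- (pow_INR 2). apply le_INR. apply count_alpha; auto.
Qed.

Lemma Npos_R m l : 0 < IZR (Nmod m l).
Proof. apply IZR_lt. unfold Nmod. apply Z.pow_pos_nonneg; lia. Qed.

Lemma beta_bounds m l r : (1 <= r)%Z -> 0 <= IZR (beta m l r) /\ 0 <= IZR (r - beta m l r).
Proof. intros. unfold beta. assert (h := Z.mod_pos_bound (Nmod m l) r ltac:(lia)).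
  split; apply IZR_le; lia. Qed.

Lemma prob_bound_b m l r j : (1 <= r)%Z -> (r <= Nmod m l)%Z -> prob m l r j <= 4 / IZR r.
Proof.
  intros Hr HrN. unfold prob.
  set (N := Nmod m l) in *. set (th := 2 * PI * _ / _).
  assert (NP := Npos_R m l). fold N in NP.
  destruct (beta_bounds m l r Hr) as [b0 b1].
  set (L := Z.to_nat (Lq m l r)).
  assert (G1 := geom_le_sq th (L+1)). assert (G2 := geom_le_sq th L).
  assert (g1 : 0 <= geomsq th (L+1)) by (unfold geomsq; nra).
  assert (g2 : 0 <= geomsq th L) by (unfold geomsq; nra).
  assert (L0 : (0 <= Lq m l r)%Z) by (unfold Lq; apply Z.div_pos; lia).
  assert (EL : INR L = IZR (Lq m l r)) by (unfold L; rewrite INR_IZR_INZ, Z2Nat.id; auto).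
  assert (HL : (r * (Lq m l r + 1) <= 2 * N)%Z).
  { unfold Lq. fold N. assert (h := Z.mul_div_le N r ltac:(lia)). lia. }
  apply IZR_le in HL. rewrite mult_IZR, plus_IZR, mult_IZR in HL.
  rewrite plus_INR, EL in G1. simpl INR in G1. rewrite EL in G2.
  set (Lr := IZR (Lq m l r)) in *.
  assert (Lr0 : 0 <= Lr) by (apply IZR_le; auto).
  assert (rp : 0 < IZR r) by (apply IZR_lt; lia).
  assert (E : IZR (beta m l r) + IZR (r - beta m l r) = IZR r) by (rewrite <- plus_IZR; f_equal; ring).
  set (b := IZR (beta m l r)) in *. set (b' := IZR (r - beta m l r)) in *.
  assert (S1 : b / IZR N ^ 2 * geomsq th (L + 1) + b' / IZR N ^ 2 * geomsq th L
           <= IZR r * (Lr + 1)^2 / IZR N ^ 2).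
  { unfold Rdiv. assert (0 < / IZR N ^ 2) by (apply Rinv_0_lt_compat; nra).
    assert (Lr^2 <= (Lr+1)^2) by nra.
    assert (b * geomsq th (L+1) <= b * (Lr+1)^2) by (apply Rmult_le_compat_l; lra).
    assert (b' * geomsq th L <= b' * (Lr+1)^2) by (apply Rmult_le_compat_l; lra).
    replace (IZR r) with (b + b') by exact E.
    set (iN := / IZR N ^ 2) in *. nra. }
  eapply Rle_trans. exact S1.
  apply (Rmult_le_reg_r (IZR N ^ 2 * IZR r)). apply Rmult_lt_0_compat; [apply pow_lt|]; lra.
  field_simplify; [|lra|lra]. assert (0 <= IZR r * (Lr + 1)) by nra. replace (IZR r ^ 2 * Lr ^ 2 + 2 * IZR r ^ 2 * Lr + IZR r ^ 2) with ((IZR r * (Lr+1))^2) by ring. nra.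
Qed.

Lemma prob_bound_a m l r t j : (1 <= m + l)%nat -> (1 <= t)%nat -> (1 <= r)%Z -> Pt m l r t j = true ->
  prob m l r j <= IZR r / (4 * IZR (2 ^ (Z.of_nat t - 1)) ^ 2).
Proof.
  intros Hml Ht Hr Hp.
  set (T := (Z.of_nat t - 1)%Z) in *.
  set (AZ := (2 ^ T)%Z) in *.
  assert (ET : Z.of_nat t = (T + 1)%Z) by (unfold T; lia).
  assert (Apos : (0 < AZ)%Z) by (apply Z.pow_pos_nonneg; lia).
  assert (E2A : (2 ^ Z.of_nat t = 2 * AZ)%Z) by (rewrite ET, Z.pow_add_r by lia; unfold AZ; ring).
  set (al := alpha m l r (Z.of_nat j)) in *.
  unfold Pt in Hp. fold al T AZ in Hp. rewrite E2A in Hp.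
  apply andb_prop in Hp. destruct Hp as [H1 H2]. apply Z.leb_le in H1. apply Z.ltb_lt in H2.
  set (N := Nmod m l) in *.
  set (K := (Z.of_nat (m + l) - 1)%Z).
  assert (EN : N = (2 * 2 ^ K)%Z).
  { unfold N, Nmod. replace (Z.of_nat (m+l)) with (K + 1)%Z by (unfold K; lia).
    rewrite Z.pow_add_r by lia. ring. }
  assert (Kp : (0 < 2 ^ K)%Z) by (apply Z.pow_pos_nonneg; lia).
  assert (Hal : (- 2 ^ K <= al < 2 ^ K)%Z).
  { unfold al, alpha, symmod. fold N. rewrite EN.
    replace (2 * 2 ^ K / 2)%Z with (2 ^ K)%Z by (rewrite Z.mul_comm, Z.div_mul; lia).
    assert (h := Z.mod_pos_bound (r * Z.of_nat j + 2 ^ K) (2 * 2 ^ K) ltac:(lia)). lia. }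
  assert (Ha2 : (2 * Z.abs al <= N)%Z) by lia.
  assert (Hcase : (4 * AZ <= N)%Z \/ (2 * AZ = N)%Z).
  { assert (h : (2 ^ Z.of_nat t <= 2 ^ Z.of_nat (m + l))%Z) by (rewrite E2A; fold (Nmod m l) N; lia).
    apply Z.pow_le_mono_r_iff in h; [|lia|lia].
    destruct (Z.eq_dec (Z.of_nat t) (Z.of_nat (m+l))) as [e|e].
    - right. rewrite <- E2A. unfold N, Nmod. rewrite e. reflexivity.
    - left. assert (h2 : (2 ^ (Z.of_nat t + 1) <= 2 ^ Z.of_nat (m + l))%Z)
        by (apply Z.pow_le_mono_r; lia).
      rewrite Z.pow_add_r, E2A in h2 by lia. change (2^1)%Z with 2%Z in h2. unfold N, Nmod. lia. }
  assert (HS := sin_lower (IZR (Z.abs al)) (IZR AZ) (IZR N)).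
  assert (HS' : (2 * IZR AZ / IZR N) ^ 2 <= sin (PI * IZR (Z.abs al) / IZR N) ^ 2).
  { apply HS.
    - split; apply IZR_lt || apply IZR_le; lia.
    - replace 2 with (IZR 2) by reflexivity. rewrite <- mult_IZR. apply IZR_le; lia.
    - destruct Hcase as [c|c]; [left|right]; replace 4 with (IZR 4) by reflexivity || replace 2 with (IZR 2) by reflexivity;
        rewrite <- mult_IZR; [apply IZR_le | f_equal]; lia. }
  clear HS.
  set (th := 2 * PI * IZR al / IZR N).
  assert (NP := Npos_R m l). fold N in NP.
  assert (Esin : sin (th/2) ^ 2 = sin (PI * IZR (Z.abs al) / IZR N) ^ 2).
  { rewrite abs_IZR. unfold th. destruct (Rle_or_lt 0 (IZR al)).
    - rewrite Rabs_pos_eq by lra. f_equal. f_equal. field. lra.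
    - rewrite Rabs_left by lra. replace (PI * - IZR al / IZR N) with (- (2 * PI * IZR al / IZR N / 2)) by (field; lra).
      rewrite sin_neg. ring. }
  set (A := IZR AZ) in *.
  assert (Ap : 0 < A) by (apply IZR_lt; lia).
  assert (Gb : forall n, geomsq th n <= IZR N ^ 2 / (4 * A ^ 2)).
  { intros n. assert (h := geom_sin th n). rewrite Esin in h.
    assert (g0 : 0 <= geomsq th n) by (unfold geomsq; nra).
    set (s := sin (PI * IZR (Z.abs al) / IZR N) ^ 2) in *.
    assert (q : (2 * A / IZR N) ^ 2 = 4 * A^2 / IZR N ^ 2) by (field; lra).
    rewrite q in HS'.
    assert (geomsq th n * (4 * A^2 / IZR N ^ 2) <= 1) by nra.
    apply (Rmult_le_reg_r (4 * A ^ 2 / IZR N ^ 2)).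
    { apply Rmult_lt_0_compat; [nra | apply Rinv_0_lt_compat; nra]. }
    field_simplify; [|lra|lra]. field_simplify in H; [|lra]. lra. }
  unfold prob. fold N al th.
  destruct (beta_bounds m l r Hr) as [b0 b1].
  assert (E : IZR (beta m l r) + IZR (r - beta m l r) = IZR r) by (rewrite <- plus_IZR; f_equal; ring).
  set (b := IZR (beta m l r)) in *. set (b' := IZR (r - beta m l r)) in *.
  set (G1 := geomsq th _). set (G2 := geomsq th _).
  assert (h1 := Gb (Z.to_nat (Lq m l r) + 1)%nat). assert (h2 := Gb (Z.to_nat (Lq m l r))).
  fold G1 in h1. fold G2 in h2.
  assert (b * G1 <= b * (IZR N ^ 2 / (4 * A ^ 2))) by (apply Rmult_le_compat_l; lra).
  assert (b' * G2 <= b' * (IZR N ^ 2 / (4 * A ^ 2))) by (apply Rmult_le_compat_l; lra).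
  rewrite <- E.
  apply (Rmult_le_reg_r (IZR N ^ 2)). nra.
  field_simplify; [|lra|lra].
  replace ((b * IZR N ^ 2 + IZR N ^ 2 * b') / (4 * A ^ 2)) with (b * (IZR N ^ 2 / (4 * A ^ 2)) + b' * (IZR N ^ 2 / (4 * A ^ 2))) by (field; lra).
  lra.
Qed.

Lemma IZR2pow n : IZR (2 ^ Z.of_nat n) = 2 ^ n.
Proof. rewrite <- pow_IZR. reflexivity. Qed.

Theorem mainTheorem16 (m l : nat) (r : Z) :
  (1 <= m)%nat -> (1 <= l)%nat ->
  ((2 <= r < 2 ^ Z.of_nat m)%Z ->
     forall t : nat, (1 <= t)%nat ->
       rho m l r t <= powerRZ 2 (Z.of_nat m - Z.of_nat t)) /\
  ((2 ^ (Z.of_nat m - 1) <= r < 2 ^ Z.of_nat m)%Z -> (2 <= r)%Z ->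
     forall t : nat, (1 <= t)%nat ->
       rho m l r t <= Rmin (powerRZ 2 (Z.of_nat m - Z.of_nat t))
                           (powerRZ 2 (Z.of_nat t + 3 - Z.of_nat m))).
Proof.
  intros Hm Hl.
  assert (PA : (2 <= r < 2 ^ Z.of_nat m)%Z -> forall t : nat, (1 <= t)%nat ->
       rho m l r t <= powerRZ 2 (Z.of_nat m - Z.of_nat t)).
  { intros [Hr1 Hr2] t Ht.
    assert (Et : (Z.of_nat t - 1 = Z.of_nat (t - 1))%Z) by lia.
    set (a := 2 ^ (t - 1)).
    assert (ap : 0 < a) by (apply pow_lt; lra).
    assert (e2 : 2 ^ t = 2 * a) by (unfold a; replace t with (S (t-1)) at 1 by lia; reflexivity).
    assert (rp : 0 < IZR r) by (apply IZR_lt; lia).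
    assert (rm : IZR r <= 2 ^ m) by (rewrite <- IZR2pow; apply IZR_le; lia).
    eapply Rle_trans.
    { apply (rho_bound m l r t (IZR r / (4 * IZR (2 ^ (Z.of_nat t - 1)) ^ 2))); auto; try lia.
      - rewrite Et, IZR2pow. fold a. apply Rmult_le_pos; [lra|]. left. apply Rinv_0_lt_compat. nra.
      - intros j Hj. apply prob_bound_a; auto; lia. }
    rewrite Et, IZR2pow, powZ. fold a. rewrite e2.
    apply (Rmult_le_reg_r (2 * a)). lra. field_simplify; lra. }
  split; [exact PA|].
  intros [Hr1 Hr2] Hr t Ht. apply Rmin_glb; [apply PA; auto; lia|].
  assert (rp : 0 < IZR r) by (apply IZR_lt; lia).
  assert (rm : 2 ^ m <= 2 * IZR r).
  { rewrite <- IZR2pow. replace 2 with (IZR 2) at 2 by reflexivity. rewrite <- mult_IZR. apply IZR_le.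
    replace (Z.of_nat m) with (Z.of_nat m - 1 + 1)%Z at 1 by ring. rewrite Z.pow_add_r by lia.
    change (2^1)%Z with 2%Z. lia. }
  eapply Rle_trans.
  { apply (rho_bound m l r t (4 / IZR r)); auto; try lia.
    - apply Rmult_le_pos; [lra|]. left. apply Rinv_0_lt_compat. lra.
    - intros j _. apply prob_bound_b; try lia.
      unfold Nmod. apply Z.le_trans with (2 ^ Z.of_nat m)%Z; [lia|]. apply Z.pow_le_mono_r; lia. }
  replace (Z.of_nat t + 3 - Z.of_nat m)%Z with (Z.of_nat (t + 3) - Z.of_nat m)%Z by lia.
  rewrite powZ, pow_add.
  assert (0 < 2 ^ m) by (apply pow_lt; lra). assert (0 < 2 ^ t) by (apply pow_lt; lra).
  apply (Rmult_le_reg_r (2 ^ m * IZR r)). nra. field_simplify; try lra. nra.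
Qed.
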